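(* Let $k,m\in\mathbb{N}$ with $m<k\le 2m$ and $\gcd(2k+1,2(2m+1))=1$, and let $a>0$ satisfy $\frac{1}{4km+3k+m+1}\le\frac{a}{2k+1}\le\frac{1}{4km+k+3m+1}$. For $s=0,\dots,4m+1$ and $n=0,\dots,2k$ define $X_{sn}=\frac{s}{2(2m+1)}-\frac{n}{2k+1}$, $\Phi_{sn}=\sum_{l\in\mathbb{Z}}Q_2\big(2a(2m+1)(l+X_{sn})\big)$ with $Q_2(x)=(1-|x|)\chi_{[-1,1]}(x)$, and $A_{sn}=\Phi_{sn}-\Phi_{s,2k+1-n}$ for $n=1,\dots,k$. Then $A_{s,n}=-A_{4m+2-s,n}$ for all $s=1,\dots,2m$ and $n=1,\dots,k$. *)

(* Defs.v *)
From Stdlib Require Import Reals Lra Lia ZArith Arith.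
From Coquelicot Require Import Coquelicot.
Open Scope R_scope.

Definition Q2 (x : R) : R :=
  if Rle_dec (Rabs x) 1 then 1 - Rabs x else 0.

(* Sum over l in Z: sum over l >= 0 plus sum over l <= -1.
   (In our use only finitely many terms are nonzero.) *)
Definition zsum (f : Z -> R) : R :=
  Series (fun l : nat => f (Z.of_nat l)) +
  Series (fun l : nat => f (- Z.of_nat (S l))%Z).

Definition Xsn (k m s n : nat) : R :=
  INR s / (2 * (2 * INR m + 1)) - INR n / (2 * INR k + 1).

Definition Phi (a : R) (k m s n : nat) : R :=
  zsum (fun l : Z => Q2 (2 * a * (2 * INR m + 1) * (IZR l + Xsn k m s n))).

Definition Asn (a : R) (k m s n : nat) : R :=
  Phi a k m s n - Phi a k m s (2 * k + 1 - n).

(* Main.v *)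
Require Import Defs.
From Stdlib Require Import Reals Lra Lia ZArith Arith.
From Coquelicot Require Import Coquelicot.
Open Scope R_scope.

Lemma ex0 : ex_series (fun _ : nat => 0).
Proof.
  assert (Hl : Rabs (/2) < 1) by (rewrite Rabs_pos_eq; lra).
  pose proof (is_series_scal_l 0 _ _ (is_series_geom (/2) Hl)) as H.
  eexists. eapply is_series_ext; [|exact H]. intros; cbn. unfold scal; simpl; unfold mult; simpl; ring.
Qed.

Lemma ev_zero (f : nat -> R) N : (forall l, (N <= l)%nat -> f l = 0) -> ex_series f.
Proof.
  intros H. apply (proj2 (ex_series_incr_n f N)).
  apply ex_series_ext with (fun _ => 0); [intros; symmetry; apply H; lia | apply ex0].
Qed.

Lemma q2_zero C x : 0 < C -> exists N : nat, forall l, (N <= l)%nat ->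
  Q2 (C * (IZR (Z.of_nat l) + x)) = 0 /\ Q2 (C * (IZR (- Z.of_nat l) + x)) = 0.
Proof.
  intros hC.
  set (r := Rabs x + / C).
  assert (hr : 0 < r) by (unfold r; pose proof (Rabs_pos x); pose proof (Rinv_0_lt_compat C hC); lra).
  destruct (archimed r) as [h1 _].
  assert (hup : (0 <= up r)%Z) by (apply le_IZR; lra).
  exists (Z.to_nat (up r)). intros l hl.
  assert (hN : INR (Z.to_nat (up r)) = IZR (up r)) by (rewrite INR_IZR_INZ, Z2Nat.id; auto).
  apply le_INR in hl. rewrite <- INR_IZR_INZ. rewrite opp_IZR, <- INR_IZR_INZ.
  pose proof (Rabs_pos x). pose proof (Rle_abs x). pose proof (Rle_abs (-x)). rewrite Rabs_Ropp in *.
  assert (hC1 : C * / C = 1) by (field; lra). pose proof (Rinv_0_lt_compat C hC).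
  assert (hl' : INR l > r) by lra. unfold r in hl'.
  split; unfold Q2; destruct Rle_dec as [h|h]; auto; exfalso.
  - rewrite Rabs_pos_eq in h.
    + assert (C * (INR l + x) > C * / C) by (apply Rmult_lt_compat_l; lra). lra.
    + apply Rmult_le_pos; lra.
  - rewrite Rabs_left1 in h.
    + assert (C * (INR l - x) > C * / C) by (apply Rmult_lt_compat_l; lra). lra.
    + assert (0 <= C * (INR l - x)) by (apply Rmult_le_pos; lra). lra.
Qed.

Lemma zsum_ext f g : (forall l, f l = g l) -> zsum f = zsum g.
Proof.
  intros H. unfold zsum. f_equal; apply Series_ext; intros; apply H.
Qed.

Lemma zsum_neg (h : Z -> R) :
  ex_series (fun l : nat => h (Z.of_nat l)) -> ex_series (fun l : nat => h (- Z.of_nat l)%Z) ->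
  zsum (fun l => h (- l)%Z) = zsum h.
Proof.
  intros e1 e2. unfold zsum.
  rewrite (Series_incr_1 _ e1), (Series_incr_1 _ e2).
  rewrite (Series_ext (fun l : nat => h (- - Z.of_nat (S l))%Z) (fun l => h (Z.of_nat (S l)))).
  - simpl. ring.
  - intros; rewrite Z.opp_involutive; auto.
Qed.

Lemma Phi_sym C x y : 0 < C -> x = - y ->
  zsum (fun l => Q2 (C * (IZR l + x))) = zsum (fun l => Q2 (C * (IZR l + y))).
Proof.
  intros hC hxy.
  set (h := fun l : Z => Q2 (C * (IZR l + x))).
  transitivity (zsum (fun l => h (- l)%Z)).
  - symmetry. destruct (q2_zero C x hC) as [N HN]. apply zsum_neg.
    + apply (ev_zero _ N). intros l hl. apply (HN l hl).
    + apply (ev_zero _ N). intros l hl. apply (HN l hl).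
  - apply zsum_ext. intros l. unfold h. rewrite opp_IZR.
    unfold Q2. replace (C * (- IZR l + x)) with (- (C * (IZR l + y))) by (subst; ring).
    rewrite Rabs_Ropp. auto.
Qed.

Theorem lemma3p3 (k m : nat) (a : R)
  (hmk : (m < k)%nat) (hk2m : (k <= 2 * m)%nat)
  (hgcd : Nat.gcd (2 * k + 1) (2 * (2 * m + 1)) = 1%nat)
  (ha : 0 < a)
  (hlo : 1 / (4 * INR k * INR m + 3 * INR k + INR m + 1) <= a / (2 * INR k + 1))
  (hhi : a / (2 * INR k + 1) <= 1 / (4 * INR k * INR m + INR k + 3 * INR m + 1)) :
  forall s n : nat, (1 <= s <= 2 * m)%nat -> (1 <= n <= k)%nat ->
    Asn a k m s n = - Asn a k m (4 * m + 2 - s) n.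
Proof.
  intros s n hs hn.
  pose proof (pos_INR m). pose proof (pos_INR k).
  assert (hC : 0 < 2 * a * (2 * INR m + 1)) by (apply Rmult_lt_0_compat; lra).
  assert (e1 : INR (4 * m + 2 - s) = 4 * INR m + 2 - INR s)
    by (rewrite minus_INR by lia; rewrite plus_INR, mult_INR; simpl; ring).
  assert (e2 : INR (2 * k + 1 - n) = 2 * INR k + 1 - INR n)
    by (rewrite minus_INR by lia; rewrite plus_INR, mult_INR; simpl; ring).
  assert (P1 : Phi a k m (4 * m + 2 - s) n = Phi a k m s (2 * k + 1 - n)).
  { unfold Phi. apply Phi_sym; auto. unfold Xsn. rewrite e1, e2. field. lra. }
  assert (P2 : Phi a k m (4 * m + 2 - s) (2 * k + 1 - n) = Phi a k m s n).
  { unfold Phi. apply Phi_sym; auto. unfold Xsn. rewrite e1, e2. field. lra. }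
  unfold Asn. rewrite P1, P2. ring.
Qed.
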